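(* Assume $X\in\mathbb R^{n\times p}$ ($p>n$) has rank $n$, let $X=UDV^\top$ be its SVD, and define $\tilde{\mathbf y}=D^\dagger U^\top\mathbf y$, $\tilde w=V^\top w$. Then the solution $\hat\theta$ of $\min_\theta\|\theta\|^{3/2}-w^\top\theta$ subject to $\mathbf y=X\theta$ satisfies $$\hat\theta=\hat\theta_{\mathsf{OLS}}+\alpha^\star\,(I-X^\top(XX^\top)^{-1}X)\,w,\qquad \hat\theta_{\mathsf{OLS}}=X^\top(XX^\top)^{-1}\mathbf y,$$ where $$\alpha^\star=\sqrt{\frac{8\|\tilde w_{n+1:p}\|^2+\sqrt{64\|\tilde w_{n+1:p}\|^4+1296\|\tilde{\mathbf y}\|^2}}{81}}.$$
   Context: $w\in\mathbb R^p$ is any fixed vector (in the paper $w=\theta(0)/\sqrt{\|\theta(0)\|}$), $\mathbf y\in\mathbb R^n$. $X=UDV^\top$ with $U\in\mathbb R^{n\times n}$, $V\in\mathbb R^{p\times p}$ orthogonal and $D\in\mathbb R^{n\times p}$ rectangular diagonal with singular values in descending order; $D^\dagger\in\mathbb R^{p\times n}$ its pseudo-inverse. For $v\in\mathbb R^p$, $v_{n+1:p}$ denotes $v$ with its first $n$ coordinates set to zero. *)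

(* Defs.v *)
From HB Require Import structures.
From mathcomp Require Import all_boot all_order all_algebra.
From mathcomp Require Import reals exp.
Set Implicit Arguments. Unset Strict Implicit. Unset Printing Implicit Defensive.
Import Order.TTheory GRing.Theory Num.Theory.
Local Open Scope ring_scope.

Definition vnorm (R : realType) (m : nat) (v : 'cV[R]_m) : R :=
  Num.sqrt (\sum_(i < m) v i 0 ^+ 2).

(* v_{n+1:p}: v with its first n coordinates set to zero. *)
Definition tail_from (R : realType) (p : nat) (n : nat) (v : 'cV[R]_p) : 'cV[R]_p :=
  \col_(i < p) (if (n <= i)%N then v i 0 else 0).

(* Moore-Penrose pseudo-inverse of a rectangular diagonal matrix D (n x p):
   the p x n matrix with 1/d_i on the diagonal where d_i <> 0, 0 elsewhere
   (in MathComp 0^-1 = 0). *)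
Definition pinv_rdiag (R : realType) (n p : nat) (D : 'M[R]_(n, p)) : 'M[R]_(p, n) :=
  \matrix_(i < p, j < n) (if (i == j :> nat) then (D j i)^-1 else 0).

Definition is_svd (R : realType) (n p : nat) (X : 'M[R]_(n, p))
    (U : 'M[R]_n) (D : 'M[R]_(n, p)) (V : 'M[R]_p) : Prop :=
  U^T *m U = 1%:M /\ U *m U^T = 1%:M /\ V^T *m V = 1%:M /\ V *m V^T = 1%:M /\
      (forall (i : 'I_n) (j : 'I_p), (i : nat) <> j -> D i j = 0) /\
      (forall (i : 'I_n) (j : 'I_p), (i : nat) = j -> 0 <= D i j) /\
      (forall (i1 i2 : 'I_n) (j1 j2 : 'I_p), (i1 : nat) = j1 -> (i2 : nat) = j2 ->
          (i1 <= i2)%N -> D i2 j2 <= D i1 j1) /\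
    X = U *m D *m V^T.

Definition objective (R : realType) (p : nat) (w theta : 'cV[R]_p) : R :=
  powR (vnorm theta) (3 / 2) - (w^T *m theta) 0 0.

Definition is_solution (R : realType) (n p : nat) (X : 'M[R]_(n, p))
    (y : 'cV[R]_n) (w theta : 'cV[R]_p) : Prop :=
  y = X *m theta /\
  forall theta' : 'cV[R]_p, y = X *m theta' -> objective w theta <= objective w theta'.

(* Main.v *)
Require Import Defs.
From HB Require Import structures.
From mathcomp Require Import all_boot all_order all_algebra.
From mathcomp Require Import reals exp.
From mathcomp Require Import ring lra.
Import Order.TTheory GRing.Theory Num.Theory.
Local Open Scope ring_scope.

Definition dot (R : realType) p (x y : 'cV[R]_p) : R := (x^T *m y) 0 0.
Arguments dot {R p}.

Section Dot.
Context {R : realType} {p : nat}.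
Implicit Types x y z : 'cV[R]_p.

Lemma dotC x y : dot x y = dot y x.
Proof. by rewrite /dot !mxE; apply: eq_bigr => i _; rewrite !mxE mulrC. Qed.

Lemma dotDr x y z : dot x (y + z) = dot x y + dot x z.
Proof. by rewrite /dot mulmxDr mxE. Qed.

Lemma dotZr a x y : dot x (a *: y) = a * dot x y.
Proof. by rewrite /dot -scalemxAr mxE. Qed.

Lemma dotDl x y z : dot (x + y) z = dot x z + dot y z.
Proof. by rewrite dotC dotDr !(dotC z). Qed.

Lemma dotZl a x y : dot (a *: x) y = a * dot x y.
Proof. by rewrite dotC dotZr dotC. Qed.

Lemma dotNl x y : dot (- x) y = - dot x y.
Proof. by rewrite -scaleN1r dotZl mulN1r. Qed.

Lemma dotBr x y z : dot x (y - z) = dot x y - dot x z.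
Proof. by rewrite dotDr -scaleN1r dotZr mulN1r. Qed.

Lemma dot0r x : dot x 0 = 0.
Proof. by rewrite /dot mulmx0 mxE. Qed.

Lemma dot0l x : dot 0 x = 0.
Proof. by rewrite dotC dot0r. Qed.

Lemma dotM q (A : 'M[R]_(q, p)) x (y : 'cV[R]_q) : dot (A *m x) y = dot x (A^T *m y).
Proof. by rewrite /dot trmx_mul mulmxA. Qed.

Lemma dot_sum x : dot x x = \sum_(i < p) x i 0 ^+ 2.
Proof. by rewrite /dot mxE; apply: eq_bigr => i _; rewrite mxE expr2. Qed.

Lemma dot_ge0 x : 0 <= dot x x.
Proof. by rewrite dot_sum sumr_ge0 // => i _; rewrite sqr_ge0. Qed.

Lemma vnormE x : vnorm x = Num.sqrt (dot x x).
Proof. by rewrite dot_sum. Qed.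

Lemma vnorm_ge0 x : 0 <= vnorm x.
Proof. by rewrite vnormE sqrtr_ge0. Qed.

Lemma vnorm_sqr x : vnorm x ^+ 2 = dot x x.
Proof. by rewrite vnormE sqr_sqrtr // dot_ge0. Qed.

Lemma dot_eq0 x : dot x x = 0 -> x = 0.
Proof.
rewrite dot_sum => /eqP; rewrite psumr_eq0 => [/allP H|i _]; last by rewrite sqr_ge0.
apply/matrixP => i j; rewrite (ord1 j) mxE.
by have /(_ (mem_index_enum i)) := H i; rewrite implyTb sqrf_eq0 => /eqP.
Qed.

Lemma vnorm_orth (V : 'M[R]_p) x : V^T *m V = 1%:M -> vnorm (V *m x) = vnorm x.
Proof. by move=> VV; rewrite !vnormE dotM mulmxA VV mul1mx. Qed.

Lemma CS x y : dot x y <= vnorm x * vnorm y.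
Proof.
have [A0|Apos] := eqVneq (vnorm x) 0.
  have x0 : x = 0 by apply: dot_eq0; rewrite -vnorm_sqr A0 expr0n.
  by rewrite x0 dot0l mulr_ge0 // vnorm_ge0.
have [B0|Bpos] := eqVneq (vnorm y) 0.
  have y0 : y = 0 by apply: dot_eq0; rewrite -vnorm_sqr B0 expr0n.
  by rewrite y0 dot0r mulr_ge0 // vnorm_ge0.
have A0 : 0 < vnorm x by rewrite lt0r Apos vnorm_ge0.
have B0 : 0 < vnorm y by rewrite lt0r Bpos vnorm_ge0.
have := dot_ge0 (vnorm y *: x + (- vnorm x) *: y).
rewrite !dotDl !dotDr !dotZl !dotZr (dotC y x) -!vnorm_sqr.
have AB := mulr_gt0 A0 B0.
move: (dot x y) (vnorm x) (vnorm y) A0 B0 AB => q a b a0 b0 ab h.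
nra.
Qed.

Lemma CSabs x y : - dot x y <= vnorm x * vnorm y.
Proof.
have -> : vnorm x = vnorm (- x) by rewrite !vnormE dotNl dotC dotNl opprK.
by rewrite -dotNl CS.
Qed.

End Dot.

Lemma powR32 (R : realType) (x : R) : 0 <= x -> powR x (3/2) = Num.sqrt x ^+ 3.
Proof.
move=> x0; rewrite (_ : (3/2 : R) = 2^-1 * 3%:R); last by rewrite mulrC.
by rewrite powRrM powR12_sqrt // powR_mulrn // sqrtr_ge0.
Qed.
Lemma key_aux (R : realType) (s t al lam q : R) : 0 <= s -> 0 < al -> t = 3/2*al ->
  al*lam = q - t^+4 -> q <= s^+2*t^+2 ->
  0 <= (s - t)^+2 * (s + t/2) * t /\ (2/3) * ((s - t)^+2 * (s + t/2) * t) + (s^+2*t^+2 - q) = al * (s^+3 - lam - t^+3).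
Proof.
move=> s0 a0 -> h hq; split.
  apply: mulr_ge0; last lra.
  apply: mulr_ge0; [exact: sqr_ge0|lra].
by rewrite mulrBr mulrBr h; field.
Qed.

Lemma key1 (R : realType) (s t al lam q : R) : 0 <= s -> 0 <= al -> t = 3/2*al ->
  al*lam = q - t^+4 -> q <= s^+2*t^+2 -> (al = 0 -> lam = 0) -> t^+3 <= s^+3 - lam.
Proof.
move=> s0 a0 ht h hq hl.
have [al0|alp] := eqVneq al 0.
  by rewrite hl // ht al0 mulr0 expr0n subr0 exprn_ge0.
have ap : 0 < al by rewrite lt0r alp.
have [F0 E] := @key_aux R s t al lam q s0 ap ht h hq.
rewrite -subr_ge0 -(pmulr_rge0 _ ap) (_ : s ^+ 3 - lam - t ^+ 3 = s ^+ 3 - lam - t ^+ 3) // -E.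
apply: addr_ge0; [apply: mulr_ge0 => //; lra | lra].
Qed.

Lemma key2 (R : realType) (s t al lam q : R) : 0 <= s -> 0 <= al -> t = 3/2*al ->
  al*lam = q - t^+4 -> q <= s^+2*t^+2 -> - q <= s^+2*t^+2 -> (al = 0 -> lam = 0) ->
  s^+3 - lam <= t^+3 -> s = t /\ q = t^+4.
Proof.
move=> s0 a0 ht h hq hq' hl hle.
have [al0|alp] := eqVneq al 0.
  have t0 : t = 0 by rewrite ht al0 mulr0.
  move: hle hq hq'; rewrite hl // t0 expr0n subr0 /= ?mulr0 => hle hq hq'.
  have s3 : s ^+ 3 = 0 by apply/eqP; rewrite eq_le hle exprn_ge0.
  split; first by move/eqP: s3; rewrite expf_eq0 /= => /eqP.
  by rewrite expr0n /=; lra.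
have ap : 0 < al by rewrite lt0r alp.
have [F0 E] := @key_aux R s t al lam q s0 ap ht h hq.
have tp : 0 < t by rewrite ht; lra.
have H : al * (s ^+ 3 - lam - t ^+ 3) <= 0 by rewrite pmulr_rle0 //; lra.
have Fz : (s - t) ^+ 2 * (s + t / 2) * t = 0 by lra.
have pos : 0 < (s + t/2) * t by apply: mulr_gt0; lra.
have sq : (s - t)^+2 = 0.
  by move: Fz; rewrite -mulrA => /eqP; rewrite mulf_eq0 (gt_eqF pos) orbF => /eqP.
have st : s = t by apply/eqP; rewrite -subr_eq0 -sqrf_eq0 sq.
split => //; move: E H hq; rewrite st subrr expr0n /= !mul0r mulr0 add0r -exprD => E H hq.
lra.
Qed.

Lemma tailE (R : realType) n p (v : 'cV[R]_p) :
  (1%:M - \matrix_(i, j) (((i == j) && (i < n)%N)%:R : R)) *m v = tail_from n v.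
Proof.
apply/matrixP => i k; rewrite (ord1 k) !mxE (bigD1 i) //= big1 ?addr0.
  rewrite !mxE eqxx /= mulr1n; case: (leqP n i) => _ /=.
    by rewrite subr0 mul1r.
  by rewrite subrr mul0r.
move=> j ji; rewrite !mxE (eq_sym i) (negbTE ji) /= mulr0n subrr mul0r //.
Qed.

Lemma EDsym (R : realType) n p :
  (\matrix_(i, j) (((i == j) && (i < n)%N)%:R : R) : 'M_p)^T = \matrix_(i, j) (((i == j) && (i < n)%N)%:R : R).
Proof.
by apply/matrixP => i j; rewrite !mxE; case: (eqVneq i j) => [->|ij].
Qed.
Lemma sum_ind (R : realType) m i : \sum_(k < m) (((k : nat) == i)%:R : R) = (i < m)%:R.
Proof.
elim: m => [|m IH]; first by rewrite big_ord0.
rewrite big_ord_recr /= IH [(i < m.+1)%N]ltnS [(i <= m)%N]leq_eqVlt (eq_sym m).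
by case: (ltngtP i m) => //= _; rewrite ?addr0 ?add0r.
Qed.

Lemma DE1 (R : realType) n p (D : 'M[R]_(n, p)) :
  (n <= p)%N ->
  (forall (i : 'I_n) (j : 'I_p), (i : nat) <> j -> D i j = 0) ->
  (forall (i : 'I_n) (j : 'I_p), (i : nat) = j -> D i j != 0) ->
  D *m pinv_rdiag D = 1%:M.
Proof.
move=> np Hoff Hnz; apply/matrixP=> i j; rewrite !mxE.
transitivity (\sum_(k < p) ((((k:nat) == i) && (i == j))%:R : R)).
  apply: eq_bigr => k _; rewrite mxE.
  case: (eqVneq (k:nat) j) => [kj|kj].
  - case: (eqVneq (i:nat) k) => [ik|ik].
    + have ij : i = j by apply: val_inj; rewrite /= ik kj.
      subst j; rewrite eqxx mulfV //; exact: Hnz.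
    + rewrite (Hoff i k) ?mul0r //; exact/eqP.
  - rewrite mulr0; case: (eqVneq (k:nat) i) => [ki|] //=.
    case: (eqVneq i j) => // ij; subst j; by rewrite ki eqxx in kj.
case: (eqVneq i j) => [ij|ij].
  under eq_bigr do rewrite andbT.
  by rewrite sum_ind (leq_trans (ltn_ord i) np).
by under eq_bigr do rewrite andbF; rewrite big1.
Qed.

Lemma ED (R : realType) n p (D : 'M[R]_(n, p)) :
  (forall (i : 'I_n) (j : 'I_p), (i : nat) <> j -> D i j = 0) ->
  (forall (i : 'I_n) (j : 'I_p), (i : nat) = j -> D i j != 0) ->
  pinv_rdiag D *m D = \matrix_(i, j) (((i == j) && (i < n)%N)%:R).
Proof.
move=> Hoff Hnz; apply/matrixP=> i j; rewrite !mxE.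
transitivity (\sum_(k < n) ((((k:nat) == i) && (i == j))%:R : R)).
  apply: eq_bigr => k _; rewrite mxE.
  case: (eqVneq (i:nat) k) => [ik|ik].
  - case: (eqVneq i j) => [ij|ij].
    + subst j; rewrite mulVf //; exact: Hnz.
    + rewrite (Hoff k j) ?mulr0 //; move=> kj.
      suff : i = j by move/eqP; rewrite (negbTE ij).
      by apply: val_inj; rewrite /= ik.
  - by rewrite mul0r.
case: (eqVneq i j) => [ij|ij].
  by under eq_bigr do rewrite andbT; rewrite sum_ind.
by under eq_bigr do rewrite andbF; rewrite big1.
Qed.

Theorem mainTheorem4 (R : realType) (n p : nat) (X : 'M[R]_(n, p))
    (y : 'cV[R]_n) (w : 'cV[R]_p)
    (U : 'M[R]_n) (D : 'M[R]_(n, p)) (V : 'M[R]_p) :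
  (n < p)%N ->
  \rank X = n ->
  is_svd X U D V ->
  let ytil := pinv_rdiag D *m U^T *m y in
  let wtil := V^T *m w in
  let a := vnorm (tail_from n wtil) in
  let b := vnorm ytil in
  let alpha := Num.sqrt ((8 * a ^+ 2 + Num.sqrt (64 * a ^+ 4 + 1296 * b ^+ 2)) / 81) in
  let theta_OLS := X^T *m invmx (X *m X^T) *m y in
  forall theta : 'cV[R]_p,
    is_solution X y w theta <->
    theta = theta_OLS + alpha *: ((1%:M - X^T *m invmx (X *m X^T) *m X) *m w).
Proof.
move=> np rk [UU [UU' [VV [VV' [Hoff [_ [_ XE]]]]]]] ytil wtil a b alpha theta_OLS theta.
have XB : X *m pinvmx X = 1%:M by apply: mulmxVp; rewrite /row_free rk.
have Hnz : forall (i : 'I_n) (j : 'I_p), (i : nat) = j -> D i j != 0.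
  move=> i j ij; apply/negP => /eqP Dij.
  have rD : delta_mx 0 i *m D = 0 :> 'rV_p.
    rewrite -rowE; apply/matrixP => k l; rewrite !mxE.
    case: (eqVneq (i:nat) l) => [il|il]; last by apply: Hoff; apply/eqP.
    by have -> : l = j by apply: val_inj; rewrite /= -il ij.
  have h1 : delta_mx 0 i *m U^T = 0 :> 'rV_n.
    rewrite -[delta_mx 0 i *m U^T]mulmx1 -XB mulmxA XE !mulmxA.
    by rewrite -(mulmxA (delta_mx 0 i) U^T U) UU mulmx1 rD !mul0mx.
  have r0 : delta_mx 0 i = 0 :> 'rV[R]_n.
    by rewrite -[delta_mx 0 i]mulmx1 -UU mulmxA h1 mul0mx.
  by move/matrixP: r0 => /(_ 0 i); rewrite !mxE !eqxx /= => /eqP; rewrite oner_eq0.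
pose E := pinv_rdiag D.
have DE : D *m E = 1%:M := @DE1 R n p D (ltnW np) Hoff Hnz.
have EDe : E *m D = _ := @ED R n p D Hoff Hnz.
set M := V *m E *m U^T.
have XM : X *m M = 1%:M.
  rewrite XE /M !mulmxA -(mulmxA (U *m D) V^T V) VV mulmx1 -(mulmxA U D E) DE mulmx1 UU'.
  done.
have MX : M *m X = V *m (E *m D) *m V^T.
  by rewrite XE /M !mulmxA -(mulmxA (V *m E) U^T U) UU mulmx1 -(mulmxA V E D).
have EDs : (E *m D)^T = E *m D by rewrite EDe EDsym.
have MXs : (M *m X)^T = M *m X.
  by rewrite MX !trmx_mul !trmxK -(trmx_mul E D) EDs mulmxA.
have Mfac : M = X^T *m (M^T *m M).
  by rewrite mulmxA -trmx_mul MXs -mulmxA XM mulmx1.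
have XXinv : invmx (X *m X^T) = M^T *m M.
  have h : X *m X^T *m (M^T *m M) = 1%:M by rewrite -mulmxA -Mfac XM.
  have [u1 _] := mulmx1_unit h.
  by rewrite -[invmx _]mulmx1 -h (mulmxA (invmx (X *m X^T)) (X *m X^T)) mulVmx // mul1mx.
have QM : X^T *m invmx (X *m X^T) = M by rewrite XXinv -Mfac.
rewrite /theta_OLS QM.
set t0 := M *m y.
set u := (1%:M - M *m X) *m w.
have Xu : X *m u = 0.
  by rewrite /u mulmxA mulmxBr mulmx1 (mulmxA X M X) XM mul1mx subrr mul0mx.
have Xt0 : X *m t0 = y by rewrite /t0 mulmxA XM mul1mx.
have MTd : forall d : 'cV[R]_p, X *m d = 0 -> M^T *m d = 0.
  by move=> d Xd; rewrite Mfac trmx_mul trmxK -mulmxA Xd mulmx0.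
have dot0 : forall d : 'cV[R]_p, X *m d = 0 -> dot t0 d = 0.
  by move=> d Xd; rewrite /t0 dotM MTd // dot0r.
have dotw : forall d : 'cV[R]_p, X *m d = 0 -> dot w d = dot u d.
  move=> d Xd; rewrite /u dotM linearB /= trmx1 MXs mulmxBl mul1mx -mulmxA Xd mulmx0.
  by rewrite subr0.
have hb : b = vnorm t0.
  by rewrite /b /ytil /t0 /M -!mulmxA (@vnorm_orth R p V _ VV).
have ha : a = vnorm u.
  have -> : u = V *m tail_from n wtil.
    rewrite -tailE -EDe /wtil /u MX.
    have -> : 1%:M - V *m (E *m D) *m V^T = V *m (1%:M - E *m D) *m V^T.
      by rewrite mulmxBr mulmx1 mulmxBl VV'.
    by rewrite !mulmxA.
  by rewrite /a (@vnorm_orth R p V _ VV).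
have a0 : 0 <= a by rewrite ha vnorm_ge0.
have b0 : 0 <= b by rewrite hb vnorm_ge0.
pose S := Num.sqrt (64 * a ^+ 4 + 1296 * b ^+ 2).
have S0 : 0 <= S by rewrite sqrtr_ge0.
have S2 : S ^+ 2 = 64 * a ^+ 4 + 1296 * b ^+ 2.
  by rewrite sqr_sqrtr // addr_ge0 // mulr_ge0 // exprn_ge0.
have al0 : 0 <= alpha by rewrite sqrtr_ge0.
have al2 : alpha ^+ 2 = (8 * a ^+ 2 + S) / 81.
  by rewrite /alpha sqr_sqrtr // divr_ge0 // addr_ge0 // mulr_ge0 // exprn_ge0.
set ts := t0 + alpha *: u.
have Xts : X *m ts = y by rewrite /ts mulmxDr -scalemxAr Xu scaler0 addr0.
have hts : dot ts ts = (9/4 * alpha ^+ 2) ^+ 2.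
  rewrite /ts !dotDl !dotDr !dotZl !dotZr (dotC u t0) (dot0 u Xu) -!vnorm_sqr -ha -hb.
  have -> : (9/4 * alpha ^+ 2) ^+ 2 = 81/16 * (alpha^+2)^+2 by field.
  have -> : alpha * (alpha * a^+2) = alpha^+2 * a^+2 by ring.
  rewrite al2; move: S2 S0; move: (S) => S' S2 _.
  rewrite !mulr0 !add0r addr0.
  nra.
pose t := 3/2 * alpha.
have t0' : 0 <= t by rewrite /t; lra.
have vts : vnorm ts = t ^+ 2.
  rewrite vnormE hts sqrtr_sqr ger0_norm; last by apply: mulr_ge0; [lra|apply: exprn_ge0].
  by rewrite /t; field.
have sts : Num.sqrt (vnorm ts) = t by rewrite vts sqrtr_sqr ger0_norm.
have hl : alpha = 0 -> forall d, dot u d = 0.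
  move=> al00 d.
  have a00 : a = 0.
    move: al2; rewrite al00 expr0n /= => h.
    have : a ^+ 2 = 0 by move: h S0; move: (S) => S' h S0; nra.
    by move/eqP; rewrite sqrf_eq0 => /eqP.
  have u0 : u = 0 by apply: dot_eq0; rewrite -vnorm_sqr -ha a00 expr0n.
  by rewrite u0 dot0l.
have main : forall th, X *m th = y ->
    objective w ts <= objective w th /\ (objective w th <= objective w ts -> th = ts).
  move=> th Xth.
  pose d := th - ts.
  have Xd : X *m d = 0 by rewrite /d mulmxBr Xth Xts subrr.
  rewrite /objective !powR32 ?vnorm_ge0 // sts.
  set s := Num.sqrt (vnorm th).
  have s0 : 0 <= s by rewrite sqrtr_ge0.
  have hs2 : vnorm th = s ^+ 2 by rewrite sqr_sqrtr // vnorm_ge0.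
  have hs4 : dot th th = s ^+ 4 by rewrite -vnorm_sqr hs2 -exprM.
  pose q := dot ts th.
  pose lam := dot u d.
  have hlam : alpha * lam = q - t ^+ 4.
    rewrite /lam -dotZl (_ : alpha *: u = ts - t0); last by rewrite /ts addrC addKr.
    rewrite dotDl dotNl (dot0 d Xd) subr0 /d dotBr /q hts.
    by rewrite /t; field.
  have hq : q <= s ^+ 2 * t ^+ 2 by rewrite mulrC -vts -hs2 /q CS.
  have hq' : - q <= s ^+ 2 * t ^+ 2 by rewrite mulrC -vts -hs2 /q CSabs.
  have hw : (w^T *m th) 0 0 - (w^T *m ts) 0 0 = lam.
    by rewrite -[(w^T *m th) 0 0]/(dot w th) -[(w^T *m ts) 0 0]/(dot w ts) -dotBr dotw.
  have hl' : alpha = 0 -> lam = 0 by move=> h; exact: hl.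
  split.
    have := @key1 R s t alpha lam q s0 al0 erefl hlam hq hl'; lra.
  move=> hle.
  have [st qt] := @key2 R s t alpha lam q s0 al0 erefl hlam hq hq' hl' ltac:(lra).
  apply/eqP; rewrite -subr_eq0; apply/eqP; apply: dot_eq0.
  rewrite dotBr !dotDl !dotNl hs4 hts (dotC th ts) -/q qt st.
  rewrite (_ : (9 / 4 * alpha ^+ 2) ^+ 2 = t ^+ 4); last by rewrite /t; field.
  by rewrite !subrr ?subr0.
split.
  case=> hy opt.
  have [_ h] := main theta (esym hy).
  by apply: h; apply: opt; rewrite Xts.
move=> ->; split; first by rewrite Xts.
by move=> th' hy'; have [h _] := main th' (esym hy').
Qed.
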